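(* For every positive integer $n$, $$\operatorname{adim}(P_3\square P_n)\leq\begin{cases} n+1 & \text{if } n\equiv 1 \pmod 3,\\ n & \text{otherwise.}\end{cases}$$
   Context: $P_n$ is the path on $n$ vertices and $\square$ is the Cartesian product of graphs. For a graph $G$, $d(u,v)$ is the shortest-path distance and $d_1(u,v)=\min(d(u,v),2)$. A set $A\subseteq V(G)$ is an adjacency resolving set if for all distinct $x,y\in V(G)$ there is $z\in A$ with $d_1(z,x)\neq d_1(z,y)$; $\operatorname{adim}(G)$ is the minimum cardinality of an adjacency resolving set. *)

(* Defs.v *)
From mathcomp Require Import all_boot all_order.
Set Implicit Arguments. Unset Strict Implicit. Unset Printing Implicit Defensive.

(* d_1(u,v) = min(d(u,v), 2), where d is the shortest-path distance
   (d = infinity for different components).  Since d(u,v)=0 iff u=v and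
   d(u,v)=1 iff u,v adjacent (u <> v), min(d,2) unfolds to: *)
Definition dist1 (T : finType) (e : rel T) (u v : T) : nat :=
  if u == v then 0 else if e u v then 1 else 2.

Definition adj_resolving (T : finType) (e : rel T) (A : {set T}) : bool :=
  [forall x : T, forall y : T, (x != y) ==>
     [exists z in A, dist1 e z x != dist1 e z y]].

Lemma adj_resolving_exists (T : finType) (e : rel T) :
  exists k, [exists A : {set T}, adj_resolving e A && (#|A| == k)].
Proof.
exists #|[set: T]|; apply/existsP; exists [set: T]; rewrite eqxx andbT.
apply/forallP => x; apply/forallP => y; apply/implyP => nxy.
apply/existsP; exists x; rewrite in_setT /= /dist1 eqxx (negbTE nxy).
by case: (e x y).
Qed.

Definition adim (T : finType) (e : rel T) : nat := ex_minn (adj_resolving_exists e).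

Definition path_rel (n : nat) : rel 'I_n :=
  fun i j => (i.+1 == j :> nat) || (j.+1 == i :> nat).

Definition cart_rel (T1 T2 : finType) (e1 : rel T1) (e2 : rel T2) : rel (T1 * T2) :=
  fun x y => ((x.1 == y.1) && e2 x.2 y.2) || ((x.2 == y.2) && e1 x.1 y.1).
Arguments path_rel : clear implicits.

(* Main.v *)
Require Import Defs.
From mathcomp Require Import all_boot all_order.
From mathcomp Require Import zify.
Set Implicit Arguments. Unset Strict Implicit.

Definition inA (n c k : nat) : bool :=
  (c < 3) && (k < n) && [|| (k %% 3 == 1) && (c != 1), (k %% 3 == 2) && (c == 1)
                          | (n %% 3 == 1) && (k == n.-1) && (c != 1)].

Definition D (a i b j : nat) : nat :=
  if (a == b) && (i == j) then 0
  else if ((a == b) && ((i.+1 == j) || (j.+1 == i))) ||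
          ((i == j) && ((a.+1 == b) || (b.+1 == a))) then 1 else 2.

Lemma D_le2 a i b j : D a i b j <= 2.
Proof. by rewrite /D; case: ifP => _ //; case: ifP => _. Qed.

Lemma Dlt2 c k a i : D c k a i < 2 -> k <= i.+1 /\ i <= k.+1.
Proof. rewrite /D; case: ifP => h1; first lia. case: ifP => h2 //; lia. Qed.

Lemma D_far c k b j : k.+1 < j \/ j.+1 < k -> D c k b j = 2.
Proof. rewrite /D; case: ifP => h1; first lia. case: ifP => h2 //; lia. Qed.

Lemma D_shift c k a i s : D c (k + s) a (i + s) = D c k a i.
Proof. rewrite /D; repeat (case: ifP => ?); lia. Qed.

Definition goodb n :=
  all (fun a => all (fun i => all (fun b => all (fun j =>
    ((a != b) || (i != j)) ==>
    has (fun c => has (fun k => inA n c k && (D c k a i != D c k b j)) (iota 0 n)) (iota 0 3))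
  (iota 0 n)) (iota 0 3)) (iota 0 n)) (iota 0 3).

Definition domb n :=
  all (fun a => all (fun i =>
    ((a != 1) || (i != 0)) ==>
    has (fun c => has (fun k => inA n c k && (D c k a i < 2)) (iota 0 n)) (iota 0 3))
  (iota 0 n)) (iota 0 3).

Lemma small_good : all goodb (iota 1 14).
Proof. vm_compute. reflexivity. Qed.

Lemma small_dom : all domb (iota 12 3).
Proof. vm_compute. reflexivity. Qed.

Lemma mi x m : x < m -> x \in iota 0 m.
Proof. by move=> h; rewrite mem_iota add0n. Qed.

Lemma goodbP n : goodb n -> forall a i b j, a < 3 -> i < n -> b < 3 -> j < n ->
  (a != b) || (i != j) -> exists c k, inA n c k && (D c k a i != D c k b j).
Proof.
move=> /allP H a i b j ha hi hb hj hne.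
move: (H a (mi ha)) => /allP /(_ i (mi hi)) /allP /(_ b (mi hb)) /allP /(_ j (mi hj))
  /implyP /(_ hne) /hasP [c _ /hasP [k _ hk]].
by exists c, k.
Qed.

Lemma dombP n : domb n -> forall a i, a < 3 -> i < n ->
  (a != 1) || (i != 0) -> exists c k, inA n c k && (D c k a i < 2).
Proof.
move=> /allP H a i ha hi hne.
move: (H a (mi ha)) => /allP /(_ i (mi hi))
  /implyP /(_ hne) /hasP [c _ /hasP [k _ hk]].
by exists c, k.
Qed.

Definition sh n i := if i + 6 < n then (i - 3) - (i - 3) %% 3 else n - (12 + n %% 3).

Lemma sh_spec n i : 15 <= n -> i < n ->
  sh n i <= i /\ sh n i %% 3 = 0 /\
  ((i - sh n i <= 5 /\ i + 6 < n /\ (sh n i = 0 \/ 3 <= i - sh n i)) \/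
   (sh n i = n - (12 + n %% 3) /\ n <= i + 6)).
Proof. rewrite /sh; case: ifP; lia. Qed.

Lemma transfer n i s c k : 15 <= n -> i < n ->
  s <= i /\ s %% 3 = 0 /\
  ((i - s <= 5 /\ i + 6 < n /\ (s = 0 \/ 3 <= i - s)) \/
   (s = n - (12 + n %% 3) /\ n <= i + 6)) ->
  k <= i - s + 3 -> inA (12 + n %% 3) c k -> inA n c (k + s).
Proof. rewrite /inA; lia. Qed.

Lemma good12 n : 15 <= n -> goodb (12 + n %% 3).
Proof. move=> hn; apply: (allP small_good); rewrite mem_iota; lia. Qed.

Lemma dom12 n : 15 <= n -> domb (12 + n %% 3).
Proof. move=> hn; apply: (allP small_dom); rewrite mem_iota; lia. Qed.

Lemma dom_large n a i : 15 <= n -> a < 3 -> i < n -> (a != 1) || (i != 0) ->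
  exists c k, inA n c k && (D c k a i < 2).
Proof.
move=> hn ha hi hne.
have hs := sh_spec hn hi; move: (sh n i) hs => s hs.
have hi' : i - s < 12 + n %% 3 by lia.
have hne' : (a != 1) || (i - s != 0) by lia.
have [c [k /andP [hk hd]]] := dombP (dom12 hn) ha hi' hne'.
have [h1 h2] := Dlt2 hd.
exists c, (k + s); rewrite (transfer hn hi hs) //; last by lia.
by rewrite -(D_shift c k a (i - s) s) subnK in hd; [rewrite hd | lia].
Qed.

Lemma good_large n a i b j : 15 <= n -> a < 3 -> i < n -> b < 3 -> j < n ->
  (a != b) || (i != j) -> i <= j ->
  exists c k, inA n c k && (D c k a i != D c k b j).
Proof.
move=> hn ha hi hb hj hne hij.
have [far|near] := leqP (i + 3) j.
- case: (boolP ((a != 1) || (i != 0))) => hx.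
  + have [c [k /andP [hk hd]]] := dom_large hn ha hi hx.
    exists c, k; rewrite hk /=.
    have [h1 h2] := Dlt2 hd.
    have := @D_far c k b j; lia.
  + have hy : (b != 1) || (j != 0) by lia.
    have [c [k /andP [hk hd]]] := dom_large hn hb hj hy.
    exists c, k; rewrite hk /=.
    have [h1 h2] := Dlt2 hd.
    have := @D_far c k a i; lia.
- have hs := sh_spec hn hi; move: (sh n i) hs => s hs.
  have hi' : i - s < 12 + n %% 3 by lia.
  have hj' : j - s < 12 + n %% 3 by lia.
  have hne' : (a != b) || (i - s != j - s) by lia.
  have [c [k /andP [hk hd]]] := goodbP (good12 hn) ha hi' hb hj' hne'.
  have hkb : k <= i - s + 3.
    have := D_le2 c k a (i - s); have := D_le2 c k b (j - s).
    case: (ltnP (D c k a (i - s)) 2) => d1.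
      have [h1 h2] := Dlt2 d1; lia.
    case: (ltnP (D c k b (j - s)) 2) => d2.
      have [h1 h2] := Dlt2 d2; lia.
    lia.
  exists c, (k + s); rewrite (transfer hn hi hs hkb hk) /=.
  rewrite -(D_shift c k a (i - s) s) -(D_shift c k b (j - s) s) !subnK // in hd; lia.
Qed.

Lemma good_all n a i b j : a < 3 -> i < n -> b < 3 -> j < n ->
  (a != b) || (i != j) -> exists c k, inA n c k && (D c k a i != D c k b j).
Proof.
move=> ha hi hb hj hne.
have [hn|hn] := leqP n 14.
  apply: goodbP => //; apply: (allP small_good); rewrite mem_iota; lia.
have hn' : 15 <= n by [].
have [hij|hji] := leqP i j; first exact: good_large.
have hne' : (b != a) || (j != i) by lia.
have [c [k /andP [hk hd]]] := good_large hn' hb hj ha hi hne' (ltnW hji).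
by exists c, k; rewrite hk eq_sym.
Qed.

Lemma dist1E n (z x : 'I_3 * 'I_n) :
  dist1 (cart_rel (path_rel 3) (path_rel n)) z x = D z.1 z.2 x.1 x.2.
Proof.
case: z x => [[a ha] [k hk]] [[b hb] [j hj]].
by rewrite /dist1 /D /cart_rel /path_rel /= xpair_eqE.
Qed.

Definition fcol (x : nat * nat) : nat :=
  if x.2 %% 3 == 1 then x.2 + x.1 %/ 2 - 1
  else if x.2 %% 3 == 2 then x.2 else x.2 + x.1 %/ 2.

Lemma resolves_pair n (x y : 'I_3 * 'I_n) : x != y ->
  [exists z in [set x : 'I_3 * 'I_n | inA n x.1 x.2],
     dist1 (cart_rel (path_rel 3) (path_rel n)) z x != dist1 (cart_rel (path_rel 3) (path_rel n)) z y].
Proof.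
  move=> hxy.
  have hne : (x.1 != y.1 :> nat) || (x.2 != y.2 :> nat).
    apply: contraNT hxy => /norP [/negbNE/eqP h1 /negbNE/eqP h2].
    apply/eqP; case: x y h1 h2 => [x1 x2] [y1 y2] /= h1 h2.
    by congr (_, _); apply: val_inj.
  have [c [k /andP [hA hD]]] := good_all (ltn_ord x.1) (ltn_ord x.2)
     (ltn_ord y.1) (ltn_ord y.2) hne.
  have hc : c < 3 by move: hA; rewrite /inA; lia.
  have hk : k < n by move: hA; rewrite /inA; lia.
  apply/existsP; exists (Ordinal hc, Ordinal hk).
  by rewrite inE /= hA /= !dist1E.
Qed.

Theorem lemma4p14 (n : nat) : 0 < n ->
  adim (cart_rel (path_rel 3) (path_rel n)) <= (if n %% 3 == 1 then n.+1 else n).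
Proof.
move=> hn.
pose A : {set 'I_3 * 'I_n} := [set x : 'I_3 * 'I_n | inA n x.1 x.2].
have hres : adj_resolving (cart_rel (path_rel 3) (path_rel n)) A.
  apply/forallP => x; apply/forallP => y; apply/implyP; exact: resolves_pair.
have hcard : #|A| <= (if n %% 3 == 1 then n.+1 else n).
  pose f (x : 'I_3 * 'I_n) := fcol (x.1 : nat, x.2 : nat).
  have u : uniq (map f (enum A)).
    rewrite map_inj_in_uniq ?enum_uniq //.
    move=> [[a ha] [i hi]] [[b hb] [j hj]]; rewrite !mem_enum !inE /f /fcol /= => hx hy.
    move=> hfe.
    have [e1 e2] : a = b /\ i = j.
      move: hfe hx hy; rewrite /inA.
      repeat (case: ifP => ?); lia.
    subst; congr (_, _); exact: val_inj.
  have sub : {subset map f (enum A) <= iota 0 (if n %% 3 == 1 then n.+1 else n)}.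
    move=> v /mapP [[[a ha] [i hi]] hx ->]; move: hx.
    rewrite mem_enum inE mem_iota /f /fcol /inA /=.
    repeat (case: ifP => ?); lia.
  have := uniq_leq_size u sub.
  by rewrite size_map size_iota -cardE.
rewrite /adim; case: ex_minnP => m _ hmin.
apply: leq_trans (hmin #|A| _) hcard.
by apply/existsP; exists A; rewrite hres eqxx.
Qed.
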